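(* In the construction described in the context, $\sum_{i=1}^{t-1}p_G(C_i)\ge\Delta$.
   Context: The profit of $D\subseteq E$ is $p_G(D)=\mathrm{MST}(G\setminus D)-\mathrm{MST}(G)$, where $\mathrm{MST}(H)$ is the minimum spanning tree weight of $H$ w.r.t. $w$ and $\mathrm{MST}(H)=\infty$ if $H$ is disconnected. Setting: $G=(V,E)$ is a connected finite undirected graph (parallel edges allowed), $w:E\to\mathbb{R}_{\ge0}$ edge weights, $c:E\to\mathbb{R}_{>0}$ edge costs, $n=|V|$. For $S\subseteq V$, $C_G(S)=\{e\in E:|e\cap S|=1\}$ (complete cut; its edges cross it) and $C_G(S,W)=\{e\in C_G(S):w(e)<W\}$ (partial cut). $F\subseteq E$ is a set with $G'=G\setminus F=(V,E\setminus F)$ connected; $B=c(F)$ and $\Delta=\mathrm{MST}(G')-\mathrm{MST}(G)$. Construction: let $T$ be a minimum spanning tree of $G$ and $T\cap F=\{e_1,\dots,e_{t-1}\}$, with $t\ge2$. Removing these edges splits $T$ into components with vertex sets $A_1,\dots,A_t$ (a partition of $V$). Let $G'_{cc}$ be the multigraph with vertex set $V_{cc}=\{A_1,\dots,A_t\}$ having, for every edge $\{u,v\}\in E\setminus F$ with $u\in A_i$, $v\in A_j$, an edge between $A_i$ and $A_j$ of weight $w(\{u,v\})$ (identified with the original edge). Let $T'_{cc}$ be a minimum spanning tree of $G'_{cc}$, with edges $e'_1,\dots,e'_{t-1}$ indexed so that $w(e'_1)\le\dots\le w(e'_{t-1})$ (ties broken arbitrarily). For each $i$, deleting $e'_i,e'_{i+1},\dots,e'_{t-1}$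 from $T'_{cc}$ leaves a forest in which $e'_i$ joins two components $L_i,R_i\subseteq V_{cc}$. Counters $k(A)=0$ for all $A\in V_{cc}$ initially, and $k(S)=\max_{A\in S}k(A)$. For $i=1,\dots,t-1$ in order: set $X_i=L_i$ if $k(L_i)\le k(R_i)$, else $X_i=R_i$; then increase $k(A)$ by $1$ for every $A\in X_i$. Identifying a set of vertices of $G'_{cc}$ with the union of the corresponding vertex sets in $V$, define $C_i=C_G(X_i,w(e'_i))$. *)

(* Defs.v *)
From HB Require Import structures.
From mathcomp Require Import all_boot all_order all_algebra.
From mathcomp Require Import constructive_ereal.
Set Implicit Arguments. Unset Strict Implicit. Unset Printing Implicit Defensive.
Import Order.TTheory GRing.Theory Num.Theory.
Local Open Scope ring_scope.

(* A finite undirected multigraph: vertex type V, edge type E, and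
   [ends e = (u, v)] the two endpoints of e (orientation irrelevant).
   A subgraph is given by a set of edges F : {set E} (vertex set is all of V). *)
Section Graphs.
Variables (V E : finType) (ends : E -> V * V).

Definition adj (F : {set E}) : rel V :=
  fun x y => [exists e in F, (ends e == (x, y)) || (ends e == (y, x))].

Definition connectedb (F : {set E}) : bool :=
  [forall x, forall y, connect (adj F) x y].

(* T is a spanning tree of (V, F): T is a connected spanning subgraph which is
   acyclic (no edge of T lies on a cycle of T, i.e. its endpoints are
   disconnected in T minus that edge; this also excludes loops). *)
Definition spanning_tree (F T : {set E}) : bool :=
  [&& T \subset F, connectedb T &
      [forall e in T, ~~ connect (adj (T :\ e)) (ends e).1 (ends e).2]].

Variable R : realFieldType.
Variable w : E -> R.

Definition weight (T : {set E}) : R := \sum_(e in T) w e.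

(* MST(V,F): minimum weight of a spanning tree, +oo if (V,F) is disconnected *)
Definition MST (F : {set E}) : \bar R :=
  \big[Order.min/+oo%E]_(T : {set E} | spanning_tree F T) (weight T)%:E.

Definition is_MST (F T : {set E}) : Prop :=
  spanning_tree F T /\
  forall T' : {set E}, spanning_tree F T' -> weight T <= weight T'.

Definition profit (D : {set E}) : \bar R := (MST (~: D) - MST setT)%E.

Definition crosses (S : {set V}) (e : E) : bool :=
  ((ends e).1 \in S) != ((ends e).2 \in S).
Definition cut (S : {set V}) : {set E} := [set e | crosses S e].
Definition pcut (S : {set V}) (W : R) : {set E} :=
  [set e | crosses S e & w e < W].

End Graphs.

(* The counter process on the vertex set Vc of the contracted graph.
   L i, R i : the two sides at step i (0-based). *)
Section Counters.
Variables (Vc : finType) (L Rs : nat -> {set Vc}).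

Definition kset (k : Vc -> nat) (S : {set Vc}) : nat := (\max_(A in S) k A)%N.

Definition Xsel (k : Vc -> nat) (i : nat) : {set Vc} :=
  if (kset k (L i) <= kset k (Rs i))%N then L i else Rs i.

Fixpoint kstate (i : nat) : Vc -> nat :=
  match i with
  | 0 => fun _ => 0%N
  | i'.+1 => fun A => (kstate i' A + (A \in Xsel (kstate i') i'))%N
  end.

Definition Xstep (i : nat) : {set Vc} := Xsel (kstate i) i.

End Counters.

(* Main.v *)
Require Import Defs.
From HB Require Import structures.
From mathcomp Require Import all_boot all_order all_algebra.
From mathcomp Require Import constructive_ereal ring lra.
Import Order.TTheory GRing.Theory Num.Theory.
Local Open Scope ring_scope.

Set Implicit Arguments. Unset Strict Implicit. Unset Printing Implicit Defensive.

Section Gen.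
Variables (V E : finType) (ends : E -> V * V).

Lemma adjP (S : {set E}) x y :
  reflect (exists2 e, e \in S & (ends e = (x, y) \/ ends e = (y, x))) (adj ends S x y).
Proof.
apply: (iffP existsP) => [[e /andP[eS /orP[/eqP|/eqP] H]]|[e eS [H|H]]].
- by exists e => //; left.
- by exists e => //; right.
- by exists e; rewrite eS H eqxx.
- by exists e; rewrite eS H eqxx orbT.
Qed.

Lemma adj_sym (S : {set E}) : symmetric (adj ends S).
Proof.
move=> x y; apply/adjP/adjP => [][e eS H]; exists e => //; tauto.
Qed.

Lemma connect_symS (S : {set E}) : connect_sym (adj ends S).
Proof. exact/sym_connect_sym/adj_sym. Qed.

Lemma adj_edge (S : {set E}) e : e \in S -> adj ends S (ends e).1 (ends e).2.
Proof. by move=> eS; apply/adjP; exists e => //; left; case: (ends e). Qed.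

Lemma connect_reroute (S1 S2 : {set E}) x y :
  (forall e, e \in S1 -> connect (adj ends S2) (ends e).1 (ends e).2) ->
  connect (adj ends S1) x y -> connect (adj ends S2) x y.
Proof.
move=> H; apply: connect_sub => a b /adjP[e eS [He|He]]; have := H e eS; rewrite He //.
by rewrite connect_symS.
Qed.

Lemma connect_mono (S1 S2 : {set E}) x y :
  S1 \subset S2 -> connect (adj ends S1) x y -> connect (adj ends S2) x y.
Proof.
move=> sub; apply: connect_reroute => e eS; apply: connect1; apply: adj_edge.
exact: (subsetP sub).
Qed.

Lemma connectedb_mono (S1 S2 : {set E}) :
  S1 \subset S2 -> connectedb ends S1 -> connectedb ends S2.
Proof.
move=> sub /forallP H; apply/forallP => x; apply/forallP => y.
by apply: connect_mono sub _; have /forallP := H x; apply.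
Qed.

Lemma connectedb_reroute (S1 S2 : {set E}) :
  (forall e, e \in S1 -> connect (adj ends S2) (ends e).1 (ends e).2) ->
  connectedb ends S1 -> connectedb ends S2.
Proof.
move=> H /forallP H1; apply/forallP => x; apply/forallP => y.
by apply: connect_reroute H _; have /forallP := H1 x; apply.
Qed.

Lemma path_avoid (S : {set E}) e x y p :
  path (adj ends S) y p -> x \notin y :: p ->
  ((ends e).1 = x \/ (ends e).2 = x) -> path (adj ends (S :\ e)) y p.
Proof.
elim: p y => [//|z p IH] y /= /andP[Hyz Hp].
rewrite in_cons negb_or => /andP[xy xzp] He.
rewrite IH // andbT.
move/adjP: Hyz => [e' e'S H']; apply/adjP; exists e' => //.
rewrite !inE e'S andbT; apply/eqP => ee; subst e'.
move: xzp; rewrite in_cons negb_or => /andP[xz _].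
by move: xy xz; case: He H' => <- [->|->] /=; rewrite ?eqxx.
Qed.

Lemma exchange_path (S : {set E}) (X : {set V}) p x :
  path (adj ends S) x p -> uniq (x :: p) -> x \in X -> last x p \notin X ->
  exists2 g, g \in S & exists a b, [/\ (ends g = (a, b) \/ ends g = (b, a)),
     a \in X, b \notin X, connect (adj ends (S :\ g)) x a &
     connect (adj ends (S :\ g)) b (last x p)].
Proof.
elim: p x => [|y p IH] x /=; first by move=> _ _ ->.
move=> /andP[Hxy Hp] /andP[xyp uyp] xX lX.
case yX: (y \in X).
- have [g gS [a [b [Hg aX bX ca cb]]]] := IH y Hp uyp yX lX.
  exists g => //; exists a, b; split => //.
  apply: connect_trans ca; apply: connect1.
  move/adjP: Hxy => [e eS He]; apply/adjP; exists e => //.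
  rewrite !inE eS andbT; apply/eqP => eg; subst e.
  by move: bX; case: Hg He => -> [[? ?]|[? ?]]; subst; rewrite ?xX ?yX.
- move/adjP: Hxy => [e eS He]; exists e => //; exists x, y; split => //.
  + by rewrite yX.
  + apply/connectP; exists p => //.
    apply: (path_avoid (x := x)) => //.
    by case: He => ->; [left|right].
Qed.

Lemma exchange (S : {set E}) (X : {set V}) u v h :
  connectedb ends S -> u \in X -> v \notin X -> (ends h = (u, v) \/ ends h = (v, u)) ->
  exists2 g, g \in S & crosses ends X g /\ connectedb ends ((S :\ g) :|: [set h]).
Proof.
move=> /forallP cS uX vX Hh.
have /connectP[p0 pp0 lp0] : connect (adj ends S) u v by have /forallP := cS u; apply.
case/shortenP: pp0 lp0 => p pp up _ lp.
have lX : last u p \notin X by rewrite -lp.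
have [g gS [a [b [Hg aX bX ca cb]]]] := exchange_path pp up uX lX.
exists g => //; split.
  by rewrite /crosses; case: Hg => ->; rewrite /= ?aX ?(negbTE bX).
apply/forallP => x; apply/forallP => y.
have Hsub : S :\ g \subset (S :\ g) :|: [set h] by apply: subsetUl.
apply: (connect_reroute (S1 := S)); last by have /forallP := cS x; apply.
move=> e eS; case: (eqVneq e g) => [->|ne].
  have cab : connect (adj ends ((S :\ g) :|: [set h])) a b.
    apply: (connect_trans (y := u)).
      by rewrite connect_symS; apply: connect_mono Hsub ca.
    apply: (connect_trans (y := v)); last first.
      by rewrite connect_symS; apply: connect_mono Hsub _; rewrite lp.
    apply: connect1; apply/adjP; exists h; first by rewrite !inE eqxx orbT.
    by case: Hh; [left|right].
  by case: Hg => ->; rewrite //= connect_symS.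
apply: connect1; apply: adj_edge; by rewrite !inE ne eS.
Qed.
End Gen.

Section MSTlemmas.
Variables (V E : finType) (ends : E -> V * V) (R : realFieldType) (w : E -> R).
Hypothesis Hw : forall e, (0 <= w e)%R.
Local Open Scope ring_scope.

Lemma weight_mk (A : {set E}) : weight w A = \sum_e (if e \in A then w e else 0).
Proof. by rewrite /weight big_mkcond. Qed.

Lemma weight_sub (A B : {set E}) : A \subset B -> weight w A <= weight w B.
Proof.
move=> sub; rewrite !weight_mk; apply: ler_sum => e _.
case: ifP => eA; first by rewrite (subsetP sub e eA).
by case: ifP.
Qed.

Lemma weight_U (A B : {set E}) : weight w (A :|: B) <= weight w A + weight w B.
Proof.
rewrite !weight_mk -big_split /=; apply: ler_sum => e _.
rewrite inE; case: (e \in A); case: (e \in B) => /=; rewrite ?addr0 ?add0r //.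
by rewrite lerDl.
Qed.

Lemma weight_exch (S : {set E}) g h : g \in S -> h \notin S ->
  weight w ((S :\ g) :|: [set h]) = weight w S - w g + w h.
Proof.
move=> gS hS; rewrite setUC /weight big_setU1 /=; last by rewrite !inE negb_and hS orbT.
rewrite (big_setD1 g gS) /=; ring.
Qed.

Local Open Scope ereal_scope.

Lemma MST_le (F S : {set E}) : spanning_tree ends F S -> MST ends w F <= (weight w S)%:E.
Proof. by move=> H; rewrite /MST; apply: bigmin_le_cond. Qed.

Lemma MST_ge (F : {set E}) y : (forall S, spanning_tree ends F S -> (y <= weight w S)%R) ->
  y%:E <= MST ends w F.
Proof.
move=> H; rewrite /MST; apply: le_bigmin; first by rewrite leey.
by move=> S /H; rewrite lee_fin.
Qed.

Lemma MST_is (F T : {set E}) : is_MST ends w F T -> MST ends w F = (weight w T)%:E.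
Proof.
case=> HT Hmin; apply/eqP; rewrite eq_le MST_le //=.
by apply: MST_ge.
Qed.

Lemma conn_MST (F S : {set E}) : S \subset F -> connectedb ends S ->
  MST ends w F <= (weight w S)%:E.
Proof.
have [n] := ubnP #|S|; elim: n S => // n IH S /ltnSE leSn sub cS.
case: (boolP [forall e in S, ~~ connect (adj ends (S :\ e)) (ends e).1 (ends e).2]) => [acyc|].
  by apply: MST_le; rewrite /spanning_tree sub cS acyc.
case/forall_inPn => e eS /negPn ce.
have sub' : S :\ e \subset F by apply: subset_trans sub; apply: subD1set.
have cS' : connectedb ends (S :\ e).
  apply: connectedb_reroute cS => e' e'S.
  case: (eqVneq e' e) => [->//|ne].
  by apply: connect1; apply: adj_edge; rewrite !inE ne e'S.
have lt : (#|S :\ e| < n)%N by rewrite (cardsD1 e S) eS in leSn.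
apply: le_trans (IH _ lt sub' cS') _.
rewrite lee_fin /weight (big_setD1 e eS) /= lerDr; exact: Hw.
Qed.
End MSTlemmas.

Lemma connect_hom (T1 T2 : finType) (e1 : rel T1) (e2 : rel T2) (h : T1 -> T2) :
  (forall x y, e1 x y -> connect e2 (h x) (h y)) ->
  forall x y, connect e1 x y -> connect e2 (h x) (h y).
Proof.
move=> H x y /connectP[p pp ->]; elim: p x pp => [|z p IH] x /=; first by rewrite connect0.
by case/andP => exz pz; apply: connect_trans (H _ _ exz) (IH _ pz).
Qed.

Unset Implicit Arguments. Set Strict Implicit. Set Printing Implicit Defensive.

Theorem mainTheorem14
  (R : realFieldType) (V E : finType) (ends : E -> V * V) (w : E -> R)
  (Hloop : forall e, (ends e).1 != (ends e).2)
  (Hw : forall e, 0 <= w e)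
  (Gconn : connectedb ends setT)
  (F : {set E}) (G'conn : connectedb ends (~: F))
  (T : {set E}) (HT : is_MST ends w setT T)
  (t : nat) (Ht : (2 <= t)%N)
  (cc : V -> 'I_t) (cc_surj : forall A : 'I_t, exists x, cc x = A)
  (cc_comp : forall x y, (cc x == cc y) = connect (adj ends (T :\: F)) x y)
  (Tc : {set E})
  (HTc : is_MST (fun e => (cc (ends e).1, cc (ends e).2)) w (~: F) Tc)
  (f : 'I_t.-1 -> E) (f_inj : injective f) (f_img : Tc = [set f i | i in 'I_t.-1])
  (f_sorted : forall i j : 'I_t.-1, (i <= j)%N -> w (f i) <= w (f j))
  (L Rs : nat -> {set 'I_t})
  (HLR : forall i : 'I_t.-1,
     let ends_cc := fun e => (cc (ends e).1, cc (ends e).2) in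
     let forest := [set f j | j in 'I_t.-1 & (j < i)%N] in
     let side := fun A : 'I_t => [set B | connect (adj ends_cc forest) A B] in
     (L i = side (cc (ends (f i)).1) /\ Rs i = side (cc (ends (f i)).2)) \/
     (L i = side (cc (ends (f i)).2) /\ Rs i = side (cc (ends (f i)).1))) :
  let C := fun i : 'I_t.-1 =>
    pcut ends w [set x | cc x \in Xstep L Rs i] (w (f i)) in
  (MST ends w (~: F) - MST ends w setT <= \sum_(i < t.-1) profit ends w (C i))%E.
Proof.
cbv zeta.
set ec := fun e => (cc (ends e).1, cc (ends e).2).
set TF := T :&: F.
have [hT HTmin] := HT.
have MSTT := MST_is HT.
have [hT1 cT acT] := and3P hT.
have [HTc1 HTcmin] := HTc.
have [subTc cTc acTc] := and3P HTc1.
have [h [hTF hinj hcr]] : exists h : 'I_t.-1 -> E, [/\ (forall i, h i \in TF),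
    injective h & forall i : 'I_t.-1, crosses ec (Xstep L Rs i) (h i)].
  pose Fk k := [set f j | j in 'I_t.-1 & (j < k)%N].
  pose U (hs : nat -> E) k := [set e | has (fun j => hs j == e) (iota 0 k)].
  have memU : forall hs k e, reflect (exists2 j, (j < k)%N & hs j = e) (e \in U hs k).
    move=> hs k e; rewrite inE; apply: (iffP hasP) => [[j]|[j lt <-]].
      by rewrite mem_iota add0n /= => lt /eqP; exists j.
    by exists j; rewrite ?mem_iota ?lt.
  have memF : forall k e, reflect (exists2 j : 'I_t.-1, (j < k)%N & e = f j) (e \in Fk k).
    move=> k e; apply: (iffP imsetP) => [[j]|[j lt ->]].
      by rewrite inE => lt ->; exists j.
    by exists j; rewrite ?inE.
  have cTF : connectedb ec TF.
    apply/forallP => A; apply/forallP => B.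
    case: (cc_surj A) => x <-; case: (cc_surj B) => y <-.
    apply: (connect_hom (e1 := adj ends T) (h := cc)); last first.
      by have /forallP/(_ x)/forallP := cT; apply.
    move=> a b /adjP[e eT He]; case eF: (e \in F).
      apply: connect1; apply/adjP; exists e; first by rewrite !inE eT eF.
      by rewrite /ec; case: He => ->; [left|right].
    have : connect (adj ends (T :\: F)) a b.
      by apply: connect1; apply/adjP; exists e => //; rewrite !inE eT eF.
    by rewrite -cc_comp => /eqP ->; exact: connect0.
  have t1 : (0 < t.-1)%N by rewrite -ltnS prednK //; apply: ltnW.
  have claim : forall k, (k <= t.-1)%N -> exists hs : nat -> E,
      [/\ forall j, (j < k)%N -> hs j \in TF /\ crosses ec (Xstep L Rs j) (hs j),
          forall j1 j2, (j1 < k)%N -> (j2 < k)%N -> hs j1 = hs j2 -> j1 = j2 &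
          connectedb ec ((TF :\: U hs k) :|: Fk k)].
    elim => [_|k IH ltk].
      exists (fun _ => f (Ordinal t1)); split => //.
      apply: connectedb_mono cTF; apply/subsetP => e eTF.
      rewrite inE; apply/orP; left; rewrite inE eTF andbT.
      by apply/memU => -[j]; rewrite ltn0.
    have [hs [H1 H2 H3]] := IH (ltnW ltk).
    pose i : 'I_t.-1 := Ordinal ltk.
    have fiTc : f i \in Tc by rewrite f_img; apply: imset_f.
    have [a [b [HX Hab]]] : exists a b, Xstep L Rs k = [set B | connect (adj ec (Fk k)) a B]
        /\ (ec (f i) = (a, b) \/ ec (f i) = (b, a)).
      rewrite /Xstep /Xsel; case: (HLR i) => [[-> ->]|[-> ->]]; case: ifP => _.
      - by exists (cc (ends (f i)).1), (cc (ends (f i)).2); split => //; left.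
      - by exists (cc (ends (f i)).2), (cc (ends (f i)).1); split => //; right.
      - by exists (cc (ends (f i)).2), (cc (ends (f i)).1); split => //; right.
      - by exists (cc (ends (f i)).1), (cc (ends (f i)).2); split => //; left.
    have nab : ~~ connect (adj ec (Fk k)) a b.
      have /forall_inP/(_ _ fiTc) := acTc; apply: contra => cab.
      have sub : Fk k \subset Tc :\ f i.
        apply/subsetP => e /memF[j ltj ->]; rewrite !inE.
        rewrite f_img imset_f // andbT; apply/eqP => /f_inj ji.
        by move: ltj; rewrite ji ltnn.
      change (connect (adj ec (Tc :\ f i)) (ec (f i)).1 (ec (f i)).2).
      case: Hab => -> /=; first exact: connect_mono sub _.
      by rewrite connect_symS; apply: connect_mono sub _.
    have aX : a \in Xstep L Rs k by rewrite HX inE connect0.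
    have bX : b \notin Xstep L Rs k by rewrite HX inE.
    have [g gS [crg cS']] := exchange H3 aX bX Hab.
    have gF : g \notin Fk k.
      apply/negP => /memF[j ltj eg].
      have fjF : f j \in Fk k by apply/memF; exists j.
      have c12 := connect1 (adj_edge ec fjF).
      have e1 : ((ec (f j)).1 \in Xstep L Rs k) = ((ec (f j)).2 \in Xstep L Rs k).
        rewrite HX !inE; apply/idP/idP => H.
          exact: (connect_trans H c12).
        apply: (connect_trans H); rewrite connect_symS; exact: c12.
      by move: crg; rewrite /crosses eg e1 eqxx.
    have gTFU : g \in TF :\: U hs k by move: gS; rewrite inE (negbTE gF) orbF.
    move: (gTFU); rewrite inE => /andP[gU gTF].
    exists (fun j => if j == k then g else hs j); split.
    - move=> j; rewrite ltnS leq_eqVlt => /orP[/eqP->|ltj]; first by rewrite eqxx.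
      by rewrite (ltn_eqF ltj); apply: H1.
    - move=> j1 j2 l1 l2 /=.
      case: (eqVneq j1 k) => [e1|n1]; case: (eqVneq j2 k) => [e2|n2].
      + by rewrite e1 e2.
      + have lt2 : (j2 < k)%N by rewrite ltn_neqAle n2 -ltnS.
        rewrite ?e1 ?eqxx ?(negbTE n2) => E2; exfalso; move/negP: gU; apply.
        by apply/memU; exists j2.
      + have lt1 : (j1 < k)%N by rewrite ltn_neqAle n1 -ltnS.
        rewrite ?e2 ?eqxx ?(negbTE n1) => E2; exfalso; move/negP: gU; apply.
        by apply/memU; exists j1.
      + have lt1 : (j1 < k)%N by rewrite ltn_neqAle n1 -ltnS.
        have lt2 : (j2 < k)%N by rewrite ltn_neqAle n2 -ltnS.
        rewrite ?(negbTE n1) ?(negbTE n2); exact: H2.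
    - apply: connectedb_mono cS'; apply/subsetP => e.
      rewrite in_setU in_setD1 in_set1 => /orP[/andP[ne eS]|/eqP->]; last first.
        by rewrite in_setU; apply/orP; right; apply/memF; exists i.
      rewrite in_setU; move: eS; rewrite in_setU => /orP[eTFU|eF]; last first.
        move/memF: eF => [j ltj ->]; apply/orP; right; apply/memF; exists j => //.
        exact: ltnW.
      apply/orP; left; move: eTFU; rewrite in_setD => /andP[eU eTF].
      rewrite in_setD eTF andbT.
      apply/memU => -[j]; rewrite ltnS leq_eqVlt => /orP[/eqP->|ltj] /=.
        by rewrite eqxx => ge; rewrite ge eqxx in ne.
      rewrite (ltn_eqF ltj) => hj; move/memU: eU; apply; by exists j.
  have [hs [H1 H2 H3]] := claim _ (leqnn _).
  exists (fun i => hs i); split.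
  - by move=> i; have [] := H1 i (ltn_ord i).
  - by move=> i j /(H2 _ _ (ltn_ord i) (ltn_ord j)) /val_inj.
  - by move=> i; have [] := H1 i (ltn_ord i).
have HB : (MST ends w (~: F) <= (weight w (T :\: F) + weight w Tc)%:E)%E.
  set S := (T :\: F) :|: Tc.
  have same : forall x y, cc x = cc y -> connect (adj ends S) x y.
    move=> x y /eqP; rewrite cc_comp; apply: connect_mono; exact: subsetUl.
  have eS : forall e, e \in Tc -> adj ends S (ends e).1 (ends e).2.
    by move=> e eTc; apply: adj_edge; rewrite inE eTc orbT.
  have lift : forall p A x y, path (adj ec Tc) A p -> cc x = A -> cc y = last A p ->
      connect (adj ends S) x y.
    elim => [|B p IH] A x y /=; first by move=> _ Hx Hy; apply: same; rewrite Hx Hy.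
    case/andP => /adjP[e eTc He] pp Hx Hy.
    case: He; rewrite /ec => -[HA HB'].
    + apply: (connect_trans (y := (ends e).1)); first by apply: same; rewrite HA.
      apply: connect_trans (connect1 (eS e eTc)) _.
      exact: IH pp HB' Hy.
    + apply: (connect_trans (y := (ends e).2)); first by apply: same; rewrite HB'.
      apply: connect_trans (_ : connect _ _ (ends e).1) _.
        by rewrite connect_symS; apply: connect1; apply: eS.
      exact: IH pp HA Hy.
  apply: le_trans (conn_MST Hw (S := S) _ _) _.
  - by rewrite /S subUset subTc andbT; apply/subsetP => e; rewrite !inE => /andP[].
  - apply/forallP => x; apply/forallP => y.
    have /forallP/(_ (cc x))/forallP/(_ (cc y))/connectP[p pp lp] := cTc.
    exact: lift pp erefl lp.
  by rewrite lee_fin weight_U.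
have HE : forall i : 'I_t.-1, ((w (f i) - w (h i))%:E <=
    profit ends w (pcut ends w [set x | cc x \in Xstep L Rs i] (w (f i))))%E.
  move=> i; set X := Xstep L Rs i; set Xv := [set x | cc x \in X]; set W := w (f i).
  set C := pcut ends w Xv W.
  rewrite /profit MSTT leeBrDr // -EFinD.
  suff H : ((weight w T + W - w (h i))%:E <= MST ends w (~: C))%E.
    by apply: le_trans H; rewrite lee_fin; lra.
  apply: MST_ge => S /and3P[subS cS acS].
  case: (leP W (w (h i))) => [le|lt].
    have : weight w T <= weight w S by apply: HTmin; rewrite /spanning_tree subsetT cS acS.
    lra.
  have crh : crosses ends Xv (h i) by rewrite /crosses !inE; have := hcr i.
  have hC : h i \in C by rewrite /C /pcut inE crh lt.
  have hS : h i \notin S by apply/negP => /(subsetP subS); rewrite inE hC.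
  have [u [v [uX vX Hh]]] : exists u v, [/\ u \in Xv, v \notin Xv &
      (ends (h i) = (u, v) \/ ends (h i) = (v, u))].
    move: crh; rewrite /crosses; case E1: ((ends (h i)).1 \in Xv) => /= E2.
      by exists (ends (h i)).1, (ends (h i)).2; split => //; left; case: (ends (h i)).
    exists (ends (h i)).2, (ends (h i)).1; split; rewrite ?E1 //; first by move: E2; case: (_ \in Xv).
    by right; case: (ends (h i)).
  have [g gS [crg cS']] := exchange cS uX vX Hh.
  have := conn_MST Hw (F := setT) (subsetT _) cS'.
  rewrite MSTT lee_fin weight_exch //.
  have : ~~ (w g < W).
    have := subsetP subS g gS; rewrite in_setC /C /pcut inE crg /=.
    by [].
  rewrite -leNgt; lra.
have sumf : \sum_(i < t.-1) w (f i) = weight w Tc.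
  by rewrite f_img /weight big_imset //; move=> x y _ _; apply: f_inj.
have sumh : \sum_(i < t.-1) w (h i) <= weight w TF.
  rewrite -[X in X <= _](big_imset _ (h := h) (A := 'I_t.-1)); last by move=> x y _ _; apply: hinj.
  apply: weight_sub => //; apply/subsetP => e /imsetP[i _ ->]; exact: hTF.
have wT : weight w T = weight w TF + weight w (T :\: F) by rewrite /weight (big_setID F).
apply: (@le_trans _ _ ((weight w Tc - weight w TF)%:E)).
  rewrite MSTT; apply: le_trans (leeB HB (lexx _)) _.
  by rewrite -EFinB lee_fin wT; lra.
apply: (@le_trans _ _ (\sum_(i < t.-1) (w (f i) - w (h i))%:E)); last first.
  by apply: lee_sum => i _; exact: HE.
by rewrite sumEFin lee_fin sumrB sumf; lra.
Qed.
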